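(* Every Connes amenable dual Banach algebra is weakly Connes amenable.
   Context: A dual Banach algebra is a Banach algebra $\mathfrak{A}$ which is the dual of a Banach space $\mathfrak{A}_*$ and whose multiplication is separately $w^*$-continuous. A derivation $D:\mathfrak{A}\to F$ into a Banach $\mathfrak{A}$-bimodule $F$ is a continuous linear map with $D(ab)=D(a)\cdot b+a\cdot D(b)$; it is inner if $D(a)=a\cdot x-x\cdot a$ for some $x\in F$. A Banach $\mathfrak{A}$-bimodule $E$ is dual if $E=(E_* )^*$ for a closed submodule $E_*$ of $E^*$; it is normal if in addition the module actions $a\mapsto a\cdot x$, $a\mapsto x\cdot a$ are $w^*$-$w^*$ continuous. $\mathfrak{A}$ is Connes amenable if for every normal dual Banach $\mathfrak{A}$-bimodule $E$, every $w^*$-$w^*$ continuous derivation $\mathfrak{A}\to E$ is inner. For a Banach $\mathfrak{A}$-bimodule $E$, $\sigma wc(E)$ is the set of $x\in E$ such that $a\mapsto a\cdot x$ and $a\mapsto x\cdot a$ are continuous from $(\mathfrak{A},w^* )$ to $(E,\sigma(E,E^* ))$; it is a closed submodule, and $\sigma wc(E)^*$ is a normal dual bimodule. Let $j_{\mathfrak{A}}:\mathfrak{A}^*\to\sigma wc(\mathfrak{A})^*$ be the adjoint of the inclusion $\sigma wc(\mathfrak{A})\hookrightarrow\mathfrak{A}$ (restriction of functionals), where $\mathfrak{A}$ is a bimodule over itself. $\mathfrak{A}$ is weakly Connes amenable if for every derivation $D:\mathfrak{A}\to\mathfrak{A}^*$ such that $j_{\mathfrak{A}}\circ D:\mathfrak{A}\to\sigma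 wc(\mathfrak{A})^*$ is $w^*$-$w^*$ continuous, the derivation $j_{\mathfrak{A}}\circ D$ is inner. *)

(* Defs.v *)
From mathcomp Require Import all_boot all_algebra.
From mathcomp Require Import all_classical all_reals all_analysis.
From mathcomp Require Export complex.
Import numFieldNormedType.Exports.

Set Implicit Arguments.
Unset Strict Implicit.
Unset Printing Implicit Defensive.

Import GRing.Theory Num.Theory.
Local Open Scope ring_scope.
Local Open Scope classical_set_scope.

Section DualBanach.
Variable K : numFieldType.

Definition is_lin_functional (V : normedModType K) (f : V -> K) : Prop :=
  forall (k : K) (u v : V), f (k *: u + v) = k * f u + f v.

Definition is_cont_functional (V : normedModType K) (f : V -> K) : Prop :=
  is_lin_functional f /\ continuous (f : V -> K^o).

Definition cdual (V : normedModType K) := {f : V -> K | is_cont_functional f}.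

Definition weak_nbhs (X Y : Type) (p : X -> Y -> K) (x0 : X) (U : set X) : Prop :=
  exists (n : nat) (ys : 'I_n -> Y) (e : K), 0 < e /\
    [set x | forall i, `|p x (ys i) - p x0 (ys i)| < e] `<=` U.

Definition weak_continuous (X Y Z W : Type) (p : X -> Y -> K) (q : Z -> W -> K)
  (g : X -> Z) : Prop :=
  forall (x0 : X) (V : set Z), weak_nbhs q (g x0) V -> weak_nbhs p x0 (g @^-1` V).

Record banach_algebra (A : completeNormedModType K) (mul : A -> A -> A) : Prop := {
  ba_assoc : forall a b c, mul a (mul b c) = mul (mul a b) c;
  ba_linl : forall (k : K) a b c, mul (k *: a + b) c = k *: mul a c + mul b c;
  ba_linr : forall (k : K) a b c, mul a (k *: b + c) = k *: mul a b + mul a c;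
  ba_submul : forall a b, `|mul a b| <= `|a| * `|b| }.

(* A is the dual of the Banach space P via the pairing pA: a |-> pA a is an
   isometric linear bijection from A onto P^*. *)
Record dual_pairing (A P : completeNormedModType K) (pA : A -> P -> K) : Prop := {
  dp_linl : forall (k : K) a b x, pA (k *: a + b) x = k * pA a x + pA b x;
  dp_cont : forall a, is_cont_functional (pA a);
  dp_isom_le : forall a x, `|pA a x| <= `|a| * `|x|;
  dp_isom_ge : forall a (e : K), 0 < e ->
                 exists x, `|x| <= 1 /\ `|a| - e < `|pA a x|;
  dp_onto : forall f : P -> K, is_cont_functional f ->
                 exists a, forall x, pA a x = f x }.

Definition dual_banach_algebra (A P : completeNormedModType K)
  (mul : A -> A -> A) (pA : A -> P -> K) : Prop :=
  [/\ banach_algebra mul, dual_pairing pA,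
      (forall b, weak_continuous pA pA (fun a => mul a b)) &
      (forall b, weak_continuous pA pA (fun a => mul b a))].

Record banach_bimodule (A F : completeNormedModType K) (mul : A -> A -> A)
  (lact : A -> F -> F) (ract : F -> A -> F) : Prop := {
  bm_lact_linl : forall (k : K) a b x, lact (k *: a + b) x = k *: lact a x + lact b x;
  bm_lact_linr : forall (k : K) a x y, lact a (k *: x + y) = k *: lact a x + lact a y;
  bm_ract_linl : forall (k : K) x y a, ract (k *: x + y) a = k *: ract x a + ract y a;
  bm_ract_linr : forall (k : K) x a b, ract x (k *: a + b) = k *: ract x a + ract x b;
  bm_lact_assoc : forall a b x, lact (mul a b) x = lact a (lact b x);
  bm_ract_assoc : forall x a b, ract x (mul a b) = ract (ract x a) b;
  bm_compat : forall a x b, ract (lact a x) b = lact a (ract x b);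
  bm_lact_norm : forall a x, `|lact a x| <= `|a| * `|x|;
  bm_ract_norm : forall x a, `|ract x a| <= `|x| * `|a| }.

(* A continuous derivation D : A -> F^*, where F^* carries the dual actions
   (a.phi)(x) = phi(x.a), (phi.a)(x) = phi(a.x); an element of F^* is
   represented by a function F -> K. *)
Definition dual_derivation (A F : completeNormedModType K) (mul : A -> A -> A)
  (lact : A -> F -> F) (ract : F -> A -> F) (D : A -> F -> K) : Prop :=
  [/\ forall a, is_cont_functional (D a),
      forall (k : K) a b x, D (k *: a + b) x = k * D a x + D b x,
      exists C : K, forall a x, `|D a x| <= C * `|a| * `|x| &
      forall a b x, D (mul a b) x = D a (lact b x) + D b (ract x a)].

Definition dual_module_normal (A P F : completeNormedModType K)
  (pA : A -> P -> K) (lact : A -> F -> F) (ract : F -> A -> F) : Prop :=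
  forall phi : F -> K, is_cont_functional phi ->
    weak_continuous pA (fun (psi : F -> K) (x : F) => psi x)
                    (fun a => fun x => phi (ract x a)) /\
    weak_continuous pA (fun (psi : F -> K) (x : F) => psi x)
                    (fun a => fun x => phi (lact a x)).

(* Connes amenability: every normal dual Banach A-bimodule E = F^* (F = E_*,
   with E carrying the dual actions) has only inner w*-w* continuous
   derivations A -> E. *)
Definition connes_amenable (A P : completeNormedModType K)
  (mul : A -> A -> A) (pA : A -> P -> K) : Prop :=
  forall (F : completeNormedModType K) (lact : A -> F -> F) (ract : F -> A -> F),
    banach_bimodule mul lact ract ->
    dual_module_normal pA lact ract ->
    forall D : A -> F -> K,
      dual_derivation mul lact ract D ->
      weak_continuous pA (fun (psi : F -> K) (x : F) => psi x) D ->
      exists phi : F -> K, is_cont_functional phi /\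
        forall a x, D a x = phi (ract x a) - phi (lact a x).

Definition weak_pairing (A : completeNormedModType K) (x : A) (f : cdual A) : K :=
  proj1_sig f x.

Definition sigmawc (A P : completeNormedModType K) (mul : A -> A -> A)
  (pA : A -> P -> K) : set A :=
  [set x | weak_continuous pA (@weak_pairing A) (fun a => mul a x) /\
           weak_continuous pA (@weak_pairing A) (fun a => mul x a)].

(* A derivation D : A -> A^* (A^* with the dual
   actions of the bimodule A) is represented by D : A -> A -> K; j_A o D is
   a |-> (D a) restricted to sigmawc(A); its w*-w* continuity is continuity
   into sigmawc(A)^* with the topology sigma(sigmawc(A)^*, sigmawc(A)); it is
   inner if j_A (D a) = a.psi - psi.a for some psi in sigmawc(A)^*. *)
Definition weakly_connes_amenable (A P : completeNormedModType K)
  (mul : A -> A -> A) (pA : A -> P -> K) : Prop :=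
  forall D : A -> A -> K,
    dual_derivation mul mul mul D ->
    weak_continuous pA
      (fun (psi : A -> K) (x : {x : A | sigmawc mul pA x}) => psi (proj1_sig x)) D ->
    exists psi : A -> K,
      [/\ forall (k : K) u v, sigmawc mul pA u -> sigmawc mul pA v ->
            psi (k *: u + v) = k * psi u + psi v,
          {within sigmawc mul pA, continuous (psi : A -> K^o)} &
          forall a x, sigmawc mul pA x ->
            D a x = psi (mul x a) - psi (mul a x)].

End DualBanach.

(* Main.v *)
Require Import Defs.
From mathcomp Require Import all_boot all_algebra.
From mathcomp Require Import all_classical all_reals all_analysis.
From mathcomp Require Import complex.
From HB Require Import structures.
From mathcomp Require Import ring lra.
Set Implicit Arguments.
Unset Strict Implicit.
Unset Printing Implicit Defensive.
Import order.Order.TTheory GRing.Theory Num.Theory.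
Import numFieldNormedType.Exports.
Import complex.
Local Open Scope ring_scope.
Local Open Scope classical_set_scope.
Local Open Scope complex_scope.


Section RealHB.
Variable R : realType.
Variable V : lmodType R.
Variable p : V -> R.
Hypothesis p_add : forall u v, p (u + v) <= p u + p v.
Hypothesis p_hom : forall (t : R) v, 0 < t -> p (t *: v) = t * p v.

Definition good (G : set (V * R)) :=
  [/\ G (0, 0),
   (forall v r s, G (v, r) -> G (v, s) -> r = s),
   (forall (t : R) u v r s, G (u, r) -> G (v, s) -> G (t *: u + v, t * r + s)) &
   (forall v r, G (v, r) -> r <= p v)].

Lemma good_ext (H : set (V * R)) v : good H -> ~ (exists r, H (v, r)) ->
  exists H', [/\ good H', H `<=` H' & exists r, H' (v, r)].
Proof.
move=> [H0 Hf Hc Hd] nv.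
have Hadd d1 h1 d2 h2 : H (d1, h1) -> H (d2, h2) -> H (d1 + d2, h1 + h2).
  by move=> a b; have := Hc 1 _ _ _ _ a b; rewrite scale1r mul1r.
have Hsc (t : R) d h : H (d, h) -> H (t *: d, t * h).
  by move=> a; have := Hc t _ _ _ _ a H0; rewrite !addr0.
have key d1 h1 d2 h2 : H (d1, h1) -> H (d2, h2) -> h1 - p (d1 - v) <= p (d2 + v) - h2.
  move=> a b; have := Hd _ _ (Hadd _ _ _ _ a b).
  have := p_add (d1 - v) (d2 + v).
  rewrite addrACA addNr addr0 => ? ?; lra.
pose L := [set x | exists d h, H (d, h) /\ x = h - p (d - v)].
have L0 : L !=set0 by exists (0 - p (0 - v)), 0, 0.
have Lub : ubound L (p (0 + v) - 0).
  by move=> x [d [h [Hdh ->]]]; exact: key.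
have Lsup : has_sup L by split => //; exists (p (0 + v) - 0).
pose r := sup L.
have rge d h : H (d, h) -> h - p (d - v) <= r.
  by move=> a; apply: sup_upper_bound => //; exists d, h.
have rle d h : H (d, h) -> r <= p (d + v) - h.
  move=> a; apply: ge_sup => //.
  by move=> x [d' [h' [Hdh ->]]]; exact: key.
pose H' := [set x | exists d h (t : R), H (d, h) /\ x = (d + t *: v, h + t * r)].
exists H'; split.
- split.
  + by exists 0, 0, 0; split => //; rewrite scale0r mul0r !addr0.
  + move=> x r1 r2 [d1 [h1 [t1 [a1 e1]]]] [d2 [h2 [t2 [a2 e2]]]].
    case: e1 => ex1 er1; case: e2 => ex2 er2.
    have [et|nt] := eqVneq t1 t2.
    * subst t2; have ed : d1 = d2 by apply: (addIr (t1 *: v)); rewrite -ex1 -ex2.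
      subst d2; rewrite er1 er2 (Hf _ _ _ a1 a2) //.
    * exfalso; apply: nv.
      have hv := Hsc ((t1 - t2)^-1) _ _ (Hadd _ _ _ _ a2 (Hsc (-1) _ _ a1)).
      eexists; suff <- : (t1 - t2)^-1 *: (d2 + (-1) *: d1) = v by exact: hv.
      have -> : d2 + (-1) *: d1 = (t1 - t2) *: v.
        have e : d2 = d1 + t1 *: v - t2 *: v by rewrite -ex1 ex2 addrK.
        by rewrite scaleN1r scalerBl e addrAC [d1 + _]addrC addrK.
      by rewrite scalerA mulVf ?scale1r // subr_eq0.
  + move=> t u w r1 r2 [d1 [h1 [t1 [a1 e1]]]] [d2 [h2 [t2 [a2 e2]]]].
    case: e1 => -> ->; case: e2 => -> ->.
    exists (t *: d1 + d2), (t * h1 + h2), (t * t1 + t2); split.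
      exact: Hc.
    congr pair.
      by rewrite scalerDr scalerA scalerDl -scalerA; rewrite !addrA; congr (_ + _);
        rewrite -!addrA; congr (_ + _); rewrite addrC.
    by ring.
  + move=> x y [d [h [t [a e]]]]; case: e => -> ->.
    have [t0|t0|t0] := ltgtP t 0.
    * pose s := - t; have s0 : 0 < s by rewrite /s oppr_gt0.
      have := rge _ _ (Hsc s^-1 _ _ a).
      have -> : s^-1 *: d - v = s^-1 *: (d + t *: v).
        rewrite scalerDr scalerA (_ : s^-1 * t = -1) ?scaleN1r //.
        by rewrite /s invrN mulNr mulVf ?ltr0_neq0.
      rewrite p_hom ?invr_gt0 // => hle.
      have := ler_wpM2l (ltW s0) hle.
      rewrite mulrBr !mulrA divff ?lt0r_neq0 // !mul1r /s mulNr; lra.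
    * have := rle _ _ (Hsc t^-1 _ _ a).
      have -> : t^-1 *: d + v = t^-1 *: (d + t *: v).
        by rewrite scalerDr scalerA mulVf ?lt0r_neq0 // scale1r.
      rewrite p_hom ?invr_gt0 // => hle.
      have := ler_wpM2l (ltW t0) hle.
      rewrite mulrBr !mulrA divff ?lt0r_neq0 // !mul1r; lra.
    * by subst t; rewrite scale0r mul0r !addr0; exact: Hd.
- by move=> [d h] a; exists d, h, 0; rewrite scale0r mul0r !addr0.
- by exists r, 0, 0, 1; rewrite scale1r mul1r !add0r.
Qed.


Variable S : set V.
Hypothesis S0 : S 0.
Hypothesis SD : forall (t : R) u v, S u -> S v -> S (t *: u + v).
Variable f : V -> R.
Hypothesis f_lin : forall (t : R) u v, S u -> S v -> f (t *: u + v) = t * f u + f v.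
Hypothesis f_le : forall v, S v -> f v <= p v.

Lemma real_hahn_banach : exists F : V -> R,
  [/\ forall (t : R) u v, F (t *: u + v) = t * F u + F v,
      forall v, S v -> F v = f v &
      forall v, F v <= p v].
Proof.
pose G0 := [set x : V * R | S x.1 /\ x.2 = f x.1].
have f0 : f 0 = 0.
  have := f_lin 1 S0 S0; rewrite scale1r addr0 mul1r => h.
  by apply: (addrI (f 0)); rewrite addr0 -h.
have gG0 : good G0.
  split.
  - by split => //=.
  - by move=> v r s [_ /= ->] [_ /= ->].
  - move=> t u v r s [/= Su ->] [/= Sv ->]; split => /=; first exact: SD.
    by rewrite f_lin.
  - by move=> v r [/= Sv ->]; exact: f_le.
pose P := fun G => good (G `|` G0).
have chain : forall F : set (set (V * R)), F `<=` P -> total_on F subset ->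
    P (\bigcup_(X in F) X).
  move=> F FP Ftot.
  have two : forall x y, (\bigcup_(X in F) X `|` G0) x -> (\bigcup_(X in F) X `|` G0) y ->
      exists G, [/\ good G, G `<=` (\bigcup_(X in F) X `|` G0), G x & G y].
    move=> x y [[X FX Xx]|G0x] [[Y FY Yy]|G0y].
    - have [XY|YX] := Ftot _ _ FX FY.
      + exists (Y `|` G0); split; first exact: FP.
        * by move=> z [Yz|Gz]; [left; exists Y|right].
        * by left; exact: XY.
        * by left.
      + exists (X `|` G0); split; first exact: FP.
        * by move=> z [Xz|Gz]; [left; exists X|right].
        * by left.
        * by left; exact: YX.
    - exists (X `|` G0); split; first exact: FP.
      * by move=> z [Xz|Gz]; [left; exists X|right].
      * by left.
      * by right.
    - exists (Y `|` G0); split; first exact: FP.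
      * by move=> z [Yz|Gz]; [left; exists Y|right].
      * by right.
      * by left.
    - exists G0; split => //; by move=> z Gz; right.
  split.
  - by right; case: gG0.
  - move=> v r s a b; have [G [[_ Gf _ _] _ Gx Gy]] := two _ _ a b.
    exact: Gf Gx Gy.
  - move=> t u v r s a b; have [G [[_ _ Gc _] GU Gx Gy]] := two _ _ a b.
    exact/GU/Gc.
  - move=> v r a; have [G [[_ _ _ Gd] _ Gx _]] := two _ _ a a.
    exact: Gd Gx.
have [A [PA Amax]] := Zorn_bigcup chain.
pose H := A `|` G0.
have gH : good H by [].
have tot : forall v, exists r, H (v, r).
  move=> v; apply: contrapT => nv.
  have [H' [gH' HH' [r H'v]]] := good_ext gH nv.
  apply: (Amax H').
    split; first by move=> x Ax; apply: HH'; left.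
    move=> H'A; apply: nv; exists r; left; exact: H'A.
  rewrite /P (_ : H' `|` G0 = H') //.
  by apply/seteqP; split => [x [//|G0x]|x H'x]; [apply: HH'; right | left].
pose F v := projT1 (cid (tot v)).
have FH v : H (v, F v) by rewrite /F; case: cid.
case: gH => H0 Hf Hc Hd.
exists F; split.
- move=> t u v; apply: (Hf (t *: u + v)); first exact: FH.
  exact: Hc (FH u) (FH v).
- move=> v Sv; apply: Hf; first exact: FH.
  by right.
- move=> v; exact: Hd (FH v).
Qed.

End RealHB.


Section CFacts.
Variable R : realType.
Lemma cmulE (a b c d : R) : (a +i* b) * (c +i* d) = (a * c - b * d) +i* (a * d + b * c).
Proof. reflexivity. Qed.
Lemma tC (t : R) (z : R[i]) : t%:C * z = (t * Re z) +i* (t * Im z).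
Proof. case: z => a b /=. rewrite -complexr0 cmulE; congr Complex; ring. Qed.
Lemma iC (z : R[i]) : 'i * z = (- Im z) +i* (Re z).
Proof. case: z => a b /=. rewrite cmulE; congr Complex; ring. Qed.
Lemma caddE (a b c d : R) : (a +i* b) + (c +i* d) = (a + c) +i* (b + d).
Proof. reflexivity. Qed.
Lemma ReD (z w : R[i]) : Re (z + w) = Re z + Re w. Proof. by case: z; case: w. Qed.
Lemma ge0_RC (x : R[i]) : 0 <= x -> x = (Re x)%:C.
Proof. by case: x => a b; rewrite lecE /= => /andP[/eqP hb _]; rewrite -complexr0; congr Complex; rewrite hb. Qed.
Lemma Re_le_norm (z : R[i]) : Re z <= Re `|z|.
Proof.
rewrite normc_def /=; apply: le_trans (ler_norm _) _.
by rewrite -sqrtr_sqr ler_sqrt ?lerDl ?sqr_ge0 ?addr_ge0 // sqr_ge0.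
Qed.
End CFacts.

Section ComplexHB.
Variable R : realType.
Variable V : lmodType R[i].

Definition realV : Type := V.
HB.instance Definition _ := GRing.Zmodule.on realV.
Definition rscale (t : R) (v : realV) : realV := (t%:C *: (v : V)).
Lemma rscaleA a b v : rscale a (rscale b v) = rscale (a * b) v.
Proof. by rewrite /rscale scalerA -rmorphM. Qed.
Lemma rscale1 : left_id 1 rscale.
Proof. by move=> v; rewrite /rscale rmorph1 scale1r. Qed.
Lemma rscaleDr : right_distributive rscale +%R.
Proof. by move=> t u v; rewrite /rscale scalerDr. Qed.
Lemma rscaleDl v : {morph rscale^~ v : a b / a + b}.
Proof. by move=> a b; rewrite /rscale rmorphD scalerDl. Qed.
HB.instance Definition _ := GRing.Zmodule_isLmodule.Build R realV
  rscaleA rscale1 rscaleDr rscaleDl.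

Variable p : V -> R.
Hypothesis p_add : forall u v, p (u + v) <= p u + p v.
Hypothesis p_hom : forall (t : R) v, 0 < t -> p (t%:C *: v) = t * p v.
Hypothesis p_unit : forall (w : R[i]) v, `|w| = 1 -> p (w *: v) = p v.
Variable S : set V.
Hypothesis S0 : S 0.
Hypothesis SD : forall (k : R[i]) u v, S u -> S v -> S (k *: u + v).
Variable f : V -> R[i].
Hypothesis f_lin : forall k u v, S u -> S v -> f (k *: u + v) = k * f u + f v.
Hypothesis f_le : forall v, S v -> `|f v| <= (p v)%:C.

Lemma complex_hahn_banach : exists F : V -> R[i],
  [/\ forall k u v, F (k *: u + v) = k * F u + F v,
      forall v, S v -> F v = f v &
      forall v, `|F v| <= (p v)%:C].
Proof.
have f0 : f 0 = 0.
  have := f_lin 1 S0 S0; rewrite scale1r addr0 mul1r => h.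
  by apply: (addrI (f 0)); rewrite addr0 -h.
have fle' : forall v, S v -> Re (f v) <= p v.
  move=> v Sv; apply: le_trans (Re_le_norm _) _.
  by have := f_le Sv; rewrite lecE /= => /andP[_].
have [U [Ulin Uext Ule]] := @real_hahn_banach R realV p p_add p_hom S S0
   (fun t u v Su Sv => SD t%:C Su Sv) (fun v => Re (f v))
   (fun t u v Su Sv => etrans (congr1 _ (f_lin t%:C Su Sv)) (etrans (ReD _ _) (congr1 (fun x => x + _) (congr1 _ (tC _ _)))))
   fle'.
pose U' : V -> R := U.
have UL : forall (t : R) (u v : V), U' (t%:C *: u + v) = t * U' u + U' v := Ulin.
have Uext' : forall v : V, S v -> U' v = Re (f v) := Uext.
have Ule' : forall v : V, U' v <= p v := Ule.
clearbody U'; clear Ulin Uext Ule U; rename U' into U.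
have U0 : U 0 = 0.
  have := UL 1 0 0; rewrite scaler0 addr0 mul1r => h.
  by apply: (addrI (U 0)); rewrite addr0 -h.
have UD (u v : V) : U (u + v) = U u + U v by have := UL 1 u v; rewrite rmorph1 scale1r mul1r.
have UN (v : V) : U (- v) = - U v.
  by have := UL (-1) v 0; rewrite addr0 U0 addr0 rmorphN1 scaleN1r mulN1r.
pose F (v : V) := U v +i* (- U ('i *: v)).
have Fi v : F ('i *: v) = 'i * F v.
  by rewrite /F iC /= scalerA -expr2 sqr_i scaleN1r UN !opprK.
have Freal : forall (t : R) (x y : V), F (t%:C *: x + y) = t%:C * F x + F y.
  move=> t u v.
  rewrite /F tC caddE /= (UL t u v) scalerDr scalerA (mulrC 'i) -scalerA.
  rewrite (UL t ('i *: u) ('i *: v)).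
  congr Complex; ring.
have F0 : F 0 = 0 by rewrite /F scaler0 U0 oppr0.
have FD u v : F (u + v) = F u + F v by have := Freal 1 u v; rewrite scale1r mul1r.
have Flin k u v : F (k *: u + v) = k * F u + F v.
  have ek : k *: u = (Re k)%:C *: u + (Im k)%:C *: ('i *: u).
    by rewrite {1}(complexE k) scalerDl scalerA [_ * 'i]mulrC.
  rewrite ek -addrA Freal Freal Fi [in X in _ = X](complexE k) mulrDl -addrA.
  by congr (_ + (_ + _)); rewrite mulrA [_ * 'i]mulrC.
exists F; split => //.
- move=> v Sv; rewrite /F.
  have Siv : S ('i *: v) by rewrite -[_ *: v]addr0; exact: SD.
  rewrite Uext' // Uext' //.
  have -> : f ('i *: v) = 'i * f v by rewrite -[_ *: v]addr0 f_lin // f0 addr0.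
  by rewrite iC /= opprK; case: (f v).
- move=> v.
  have pv0 : 0 <= p v.
    have p0 : p 0 = 0.
      have := @p_hom 2 0 (ltr0Sn R 1); rewrite scaler0 => h.
      lra.
    have := p_add v (- v); rewrite subrr p0 -scaleN1r p_unit ?normrN ?normr1 //; lra.
  have [z0|zn0] := eqVneq (F v) 0.
    by rewrite z0 normr0 lecR.
  pose w := (F v)^*%C / `|F v|.
  have w1 : `|w| = 1.
    by rewrite /w normrM normcJ normfV normr_id divff // normr_eq0.
  have e : `|F v| = F (w *: v).
    rewrite -[w *: v]addr0 Flin F0 addr0 /w mulrAC [(F v)^*%C * _]mulrC -sqr_normc.
    by rewrite expr2 mulfK // normr_eq0.
  rewrite {1}normc_def lecR -[X in X <= _]/(Re ((Num.ExtraDef.sqrtr (Re (F v) ^+ 2 + Im (F v) ^+ 2))%:C)).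
  rewrite -normc_def e /F /= -(p_unit v w1); exact: Ule'.
Qed.
End ComplexHB.


Section Span.
Variable K : fieldType.
Variable U : lmodType K.
Definition linf (g : U -> K) := forall k u v, g (k *: u + v) = k * g u + g v.

Lemma linf0 g : linf g -> g 0 = 0.
Proof.
move=> hg; have := hg 1 0 0; rewrite scale1r addr0 mul1r => h.
by apply: (addrI (g 0)); rewrite addr0 -h.
Qed.
Lemma linfD g : linf g -> forall u v, g (u + v) = g u + g v.
Proof. by move=> hg u v; have := hg 1 u v; rewrite scale1r mul1r. Qed.
Lemma linfZ g : linf g -> forall k u, g (k *: u) = k * g u.
Proof. by move=> hg k u; have := hg k u 0; rewrite addr0 linf0 // addr0. Qed.
Lemma linfB g : linf g -> forall u v, g (u - v) = g u - g v.
Proof. by move=> hg u v; rewrite linfD // -scaleN1r linfZ // mulN1r. Qed.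

Lemma span_lemma (n : nat) (fs : 'I_n -> U -> K) (g : U -> K) :
  (forall i, linf (fs i)) -> linf g ->
  (forall u, (forall i, fs i u = 0) -> g u = 0) ->
  exists c : 'I_n -> K, forall u, g u = \sum_(i < n) c i * fs i u.
Proof.
elim: n fs g => [|n IH] fs g fl gl gk.
  by exists (fun _ => 0) => u; rewrite big_ord0; apply: gk => -[].
pose fs' i := fs (widen_ord (leqnSn n) i).
pose l := fs ord_max.
have fl' i : linf (fs' i) by exact: fl.
have ll : linf l by exact: fl.
have lw (j : 'I_n) : lift ord_max j = widen_ord (leqnSn n) j.
  by apply: val_inj; rewrite /= /bump leqNgt ltn_ord.
have all_i u : (forall i, fs' i u = 0) -> l u = 0 -> forall i, fs i u = 0.
  move=> h1 h2 i; case: (unliftP ord_max i) => [j ->|->] //.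
  by rewrite lw; exact: h1.
pose ext (c' : 'I_n -> K) (cl : K) (i : 'I_n.+1) :=
  if unlift ord_max i is Some j then c' j else cl.
have extE c' cl u : \sum_(i < n.+1) ext c' cl i * fs i u =
    \sum_(i < n) c' i * fs' i u + cl * l u.
  rewrite big_ord_recr /=; congr (_ + _).
    by apply: eq_bigr => i _; rewrite /ext -lw liftK lw.
  by rewrite /ext unlift_none.
have [[z [z0 lz]]|nz] := pselect (exists z, (forall i, fs' i z = 0) /\ l z != 0).
- pose a := g z / l z.
  pose g' u := g u - a * l u.
  have gl' : linf g'.
    by move=> k u v; rewrite /g' gl ll; ring.
  have hk : forall u, (forall i, fs' i u = 0) -> g' u = 0.
    move=> u hu; rewrite /g'.
    pose w := u - (l u / l z) *: z.
    have hw : forall i, fs i w = 0.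
      apply: all_i => [i|]; first by rewrite /w linfB // linfZ // hu z0 mulr0 subr0.
      by rewrite /w linfB // linfZ // divfK // ; apply: subrr.
    have := gk _ hw; rewrite /w linfB // linfZ // => /eqP; rewrite subr_eq0 => /eqP ->.
    by rewrite /a; ring.
  have [c' hc'] := IH fs' g' fl' gl' hk.
  exists (ext c' a) => u; rewrite extE -hc' /g'; ring.
- have hk : forall u, (forall i, fs' i u = 0) -> g u = 0.
    move=> u hu; apply: gk; apply: all_i => //.
    by case: (eqVneq (l u) 0) => // lu; exfalso; apply: nz; exists u; split.
  have [c' hc'] := IH fs' g fl' gl hk.
  by exists (ext c' 0) => u; rewrite extE mul0r addr0.
Qed.
End Span.


Section SubSpace.
Variable K : numFieldType.
Variable A : completeNormedModType K.
Variable S : set A.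
Hypothesis S0 : S 0.
Hypothesis SD : forall (k : K) u v, S u -> S v -> S (k *: u + v).
Hypothesis Scl : forall x, (forall e : K, 0 < e -> exists y, S y /\ `|x - y| < e) -> S x.

Definition subsp (S0' : S 0) (SD' : forall (k : K) u v, S u -> S v -> S (k *: u + v))
  (Scl' : forall x, (forall e : K, 0 < e -> exists y, S y /\ `|x - y| < e) -> S x) : Type :=
  {x : A | S x}.
Local Notation sub := (subsp S0 SD Scl).
HB.instance Definition _ := gen_eqMixin sub.
HB.instance Definition _ := gen_choiceMixin sub.

Lemma SDa u v : S u -> S v -> S (u + v).
Proof. by move=> a b; have := SD 1 a b; rewrite scale1r. Qed.
Lemma SN u : S u -> S (- u).
Proof. by move=> a; have := SD (-1) a S0; rewrite addr0 scaleN1r. Qed.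
Lemma SZ k u : S u -> S (k *: u).
Proof. by move=> a; have := SD k a S0; rewrite addr0. Qed.

Definition sub0 : sub := exist _ 0 S0.
Definition subadd (x y : sub) : sub := exist _ (sval x + sval y) (SDa (svalP x) (svalP y)).
Definition subopp (x : sub) : sub := exist _ (- sval x) (SN (svalP x)).
Definition subscale (k : K) (x : sub) : sub := exist _ (k *: sval x) (SZ k (svalP x)).

Lemma subaddA : associative subadd.
Proof. by move=> x y z; apply: eq_exist; rewrite /= addrA. Qed.
Lemma subaddC : commutative subadd.
Proof. by move=> x y; apply: eq_exist; rewrite /= addrC. Qed.
Lemma subadd0 : left_id sub0 subadd.
Proof. by move=> x; case: x => x Sx; apply: eq_exist; rewrite /= add0r. Qed.
Lemma subaddN : left_inverse sub0 subopp subadd.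
Proof. by move=> x; apply: eq_exist; rewrite /= addNr. Qed.
HB.instance Definition _ := GRing.isZmodule.Build sub subaddA subaddC subadd0 subaddN.

Lemma subscaleA a b v : subscale a (subscale b v) = subscale (a * b) v.
Proof. by apply: eq_exist; rewrite /= scalerA. Qed.
Lemma subscale1 : left_id 1 subscale.
Proof. by move=> x; case: x => x Sx; apply: eq_exist; rewrite /= scale1r. Qed.
Lemma subscaleDr : right_distributive subscale +%R.
Proof. by move=> a x y; apply: eq_exist; rewrite /= scalerDr. Qed.
Lemma subscaleDl v : {morph subscale^~ v : a b / a + b}.
Proof. by move=> a b; apply: eq_exist; rewrite /= scalerDl. Qed.
HB.instance Definition _ := GRing.Zmodule_isLmodule.Build K sub
  subscaleA subscale1 subscaleDr subscaleDl.

Definition subnorm (x : sub) : K := `|sval x|.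
Lemma subnormD x y : subnorm (x + y) <= subnorm x + subnorm y.
Proof. exact: ler_normD. Qed.
Lemma subnormZ (l : K) x : subnorm (l *: x) = `|l| * subnorm x.
Proof. exact: normrZ. Qed.
Lemma subnorm0 x : subnorm x = 0 -> x = 0.
Proof. by case: x => x Sx /normr0_eq0 /= x0; apply: eq_exist. Qed.
HB.instance Definition _ := Lmodule_isNormed.Build K sub subnormD subnormZ subnorm0.

Lemma sub_complete (F : set_system sub) : ProperFilter F -> cauchy F -> cvg F.
Proof.
move=> FF /cauchyP Fc.
have GF : ProperFilter (sval @ F) by exact: fmap_proper_filter.
have Gc : cauchy (sval @ F).
  apply/cauchyP => e e0; have [x Fx] := Fc e e0; exists (sval x).
  by rewrite /= /fmap /=; move: Fx; apply: filterS => y; rewrite -!ball_normE.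
have /cauchy_cvgP Gcv := Gc.
set l := lim (sval @ F) in Gcv.
have Sl : S l.
  apply: Scl => e e0.
  have := (cvgrPdist_lt _ _).1 Gcv e e0 => /= h.
  have [y hy] := filter_ex (h _).
  by exists (sval y); split => //; exact: svalP.
apply/cvg_ex; exists (exist _ l Sl).
apply/cvgrPdist_lt => e e0.
exact: ((cvgrPdist_lt _ _).1 Gcv e e0).
Qed.
HB.instance Definition _ := Uniform_isComplete.Build sub sub_complete.

Lemma sub_normE (x : sub) : `|x| = `|sval x|. Proof. by []. Qed.
Lemma sval_inj (x y : sub) : sval x = sval y -> x = y.
Proof. by case: x => x hx; case: y => y hy /= e; exact: eq_exist. Qed.
Lemma svalZD k (x y : sub) : sval (k *: x + y) = k *: sval x + sval y. Proof. by []. Qed.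
Lemma svalD (x y : sub) : sval (x + y) = sval x + sval y. Proof. by []. Qed.
Lemma svalZ k (x : sub) : sval (k *: x) = k *: sval x. Proof. by []. Qed.
End SubSpace.


Section Util.
Variable R : realType.
Local Notation K := (R[i]).

Lemma normRC (V : normedModType K) (x : V) : `|x| = (Re `|x|)%:C.
Proof. by apply: ge0_RC; exact: normr_ge0. Qed.

Lemma RCM (C : R) (V : normedModType K) (x : V) : (C * Re `|x|)%:C = C%:C * `|x|.
Proof. by rewrite rmorphM [in RHS](normRC x). Qed.

Lemma eq0_small (z : K) : (forall e : R, 0 < e -> `|z| <= e%:C) -> z = 0.
Proof.
move=> h; apply: contrapT => /eqP nz.
have zp : 0 < `|z| by rewrite normr_gt0.
have zr : `|z| = (Re `|z|)%:C by apply: ge0_RC; exact: ltW.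
have rp : 0 < Re `|z| by move: zp; rewrite zr ltcR.
have := h (Re `|z| / 2) (divr_gt0 rp (ltr0Sn _ 1)).
rewrite {1}zr lecR; lra.
Qed.

Lemma linf_lin (V : normedModType K) (f : V -> K) : is_lin_functional f -> linf f.
Proof. by []. Qed.

Lemma cont_bound (V : normedModType K) (f : V -> K) : is_cont_functional f ->
  exists C : R, 0 < C /\ forall v, `|f v| <= C%:C * `|v|.
Proof.
move=> [fl fc]; have fl' : linf f := fl.
have f0 : f 0 = 0 := linf0 fl'.
have := (cvgrPdist_lt _ _).1 (fc 0) 1 ltr01.
move=> /(_ _) /(nbhs_normP _ _).1 [d /= d0 hd].
have d2 : 0 < 2 / d by rewrite divr_gt0.
have Ce : 2 / d = (Re (2 / d))%:C by apply: ge0_RC; exact: ltW.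
exists (Re (2 / d)); split; first by move: d2; rewrite Ce ltcR.
move=> v; rewrite -Ce.
have [->|vn0] := eqVneq v 0; first by rewrite f0 !normr0 mulr0.
have nv : 0 < `|v| by rewrite normr_gt0.
pose t := d / 2 / `|v|.
have tp : 0 < t by rewrite /t !divr_gt0.
have hz : ball_ Num.Def.normr (0 : V) d (t *: v).
  rewrite /ball_ /= sub0r normrN normrZ ger0_norm ?ltW // /t divfK ?lt0r_neq0 //.
  by rewrite ltr_pdivrMr // ltr_pMr // ltr1n.
have := hd _ hz; rewrite /= f0 sub0r normrN linfZ // normrM (ger0_norm (ltW tp)) => h.
have : `|f v| <= t^-1.
  by rewrite -(ler_pM2l tp) mulrV ?unitfE ?lt0r_neq0 //; exact: ltW.
have -> : t^-1 = 2 / d * `|v|.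
  by rewrite /t; field; rewrite !lt0r_neq0.
by [].
Qed.

Lemma bound_cont (V : normedModType K) (f : V -> K) (C : R) : 0 <= C ->
  is_lin_functional f -> (forall v, `|f v| <= C%:C * `|v|) -> is_cont_functional f.
Proof.
move=> C0 fl hb; split => // x; apply/cvgrPdist_lt => e e0.
have fl' : linf f := fl.
have Cp : 0 < C%:C + 1 by rewrite ltr_wpDl ?ltr01 // ler0c.
apply/nbhs_normP; exists (e / (C%:C + 1)); first by rewrite /= divr_gt0.
move=> z /=; rewrite /ball_ /= => hz.
rewrite -linfB //; apply: le_lt_trans (hb _) _.
apply: le_lt_trans (_ : (C%:C + 1) * `|x - z| < e).
  by rewrite mulrDl mul1r lerDl.
by rewrite mulrC -ltr_pdivlMr.
Qed.

Lemma normed_hb (V : normedModType K) (S : set V) (S0 : S 0)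
  (SD : forall (k : K) u v, S u -> S v -> S (k *: u + v)) (f : V -> K)
  (f_lin : forall k u v, S u -> S v -> f (k *: u + v) = k * f u + f v)
  (C : R) (C0 : 0 <= C) (fb : forall v, S v -> `|f v| <= C%:C * `|v|) :
  exists F : V -> K, [/\ is_cont_functional F, forall v, S v -> F v = f v &
    forall v, `|F v| <= C%:C * `|v|].
Proof.
pose p (v : V) := C * Re `|v|.
have pC v : (p v)%:C = C%:C * `|v| by rewrite /p rmorphM [in RHS](normRC v).
have p_add u v : p (u + v) <= p u + p v.
  rewrite /p -mulrDr ler_wpM2l // -ReD.
  by have := ler_normD u v; rewrite lecE => /andP[_].
have p_hom (t : R) v : 0 < t -> p (t%:C *: v) = t * p v.
  move=> t0; rewrite /p normrZ ger0_norm ?ler0c ?ltW // tC /=; ring.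
have p_unit (w : K) v : `|w| = 1 -> p (w *: v) = p v.
  by move=> w1; rewrite /p normrZ w1 mul1r.
have [F [Flin Fext Fle]] := complex_hahn_banach p_add p_hom p_unit S0 SD f_lin
   (fun v Sv => eq_ind_r (fun x => _ <= x) (fb v Sv) (pC v)).
have Fb v : `|F v| <= C%:C * `|v| by rewrite -pC.
exists F; split => //.
exact: bound_cont C0 Flin Fb.
Qed.

End Util.


Section Rep.
Variable R : realType.
Local Notation K := (R[i]).
Variables (A P : completeNormedModType K) (pA : A -> P -> K).
Hypothesis hdp : dual_pairing pA.

Definition rep (h : A -> K) := exists q : P, forall a, h a = pA a q.

Lemma pA_linl x : linf (fun a => pA a x).
Proof. by move=> k a b; exact: (dp_linl hdp). Qed.
Lemma pA_linr a : linf (pA a).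
Proof. exact: (dp_cont hdp a).1. Qed.

Lemma pA_sum a n (c : 'I_n -> K) (ys : 'I_n -> P) :
  pA a (\sum_(i < n) c i *: ys i) = \sum_(i < n) c i * pA a (ys i).
Proof.
apply: (big_rec2 (fun y1 y2 => pA a y2 = y1)); first exact: linf0 (pA_linr a).
by move=> i y1 y2 _ <-; rewrite (pA_linr a).
Qed.

Lemma rep_wc (Z W : Type) (q : Z -> W -> K) (G : A -> Z) :
  (forall w, rep (fun a => q (G a) w)) -> weak_continuous pA q G.
Proof.
move=> hr x0 V [n [ys [e [e0 hV]]]].
pose qs i := projT1 (cid (hr (ys i))).
have qsE i a : q (G a) (ys i) = pA a (qs i) by rewrite /qs; case: cid.
exists n, qs, e; split => // x hx; apply: hV => i.
by rewrite !qsE; exact: hx.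
Qed.

Lemma wc_rep (Z W : Type) (q : Z -> W -> K) (G : A -> Z) (w : W) :
  linf (fun a => q (G a) w) -> weak_continuous pA q G -> rep (fun a => q (G a) w).
Proof.
move=> hl hwc; set h := fun a => q (G a) w.
have h0 : q (G 0) w = 0 := linf0 hl.
have := hwc 0 [set z | `|q z w - q (G 0) w| < 1] _.
case.
  exists 1%N, (fun _ => w), 1; split; first exact: ltr01.
  by move=> z /= hz; exact: hz ord0.
move=> n [ys [e [e0 hsub]]].
have ker u : (forall i, pA u (ys i) = 0) -> h u = 0.
  move=> hu; apply: contrapT => /eqP hn.
  have hx : forall i, `|pA ((2 / h u) *: u) (ys i) - pA 0 (ys i)| < e.
    move=> i; rewrite (linfZ (pA_linl _)) hu mulr0 (linf0 (pA_linl _)) subrr normr0.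
    exact: e0.
  have := hsub _ hx; rewrite /= h0 subr0 (linfZ hl) divfK // normr_nat.
  by rewrite ltrn1.
have [c hc] := @span_lemma _ _ n (fun i a => pA a (ys i)) (fun a => q (G a) w) (fun i => pA_linl (ys i)) hl ker.
exists (\sum_(i < n) c i *: ys i) => a.
by rewrite pA_sum; exact: hc.
Qed.


Lemma norming (q : P) : exists b : A, `|b| <= 2 /\ pA b q = `|q|.
Proof.
have [->|qn0] := eqVneq q 0.
  exists 0; split; first by rewrite normr0 ler0n.
  by rewrite normr0 (linf0 (pA_linr 0)).
pose S := [set v : P | exists k, v = k *: q].
pose coef (v : P) : K := match pselect (S v) with
  | left h => projT1 (cid h) | right _ => 0 end.
have coefE k : coef (k *: q) = k.
  rewrite /coef; case: pselect => [h|nS]; last by exfalso; apply: nS; exists k.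
  case: cid => /= k' e; apply/eqP; rewrite -subr_eq0; apply/eqP.
  move: e => /eqP; rewrite eq_sym -subr_eq0 -scalerBl scaler_eq0 (negbTE qn0) orbF.
  by move=> /eqP.
pose f v := coef v * `|q|.
have S0 : S 0 by exists 0; rewrite scale0r.
have SD k u v : S u -> S v -> S (k *: u + v).
  by move=> [a ->] [b ->]; exists (k * a + b); rewrite scalerDl scalerA.
have fl k u v : S u -> S v -> f (k *: u + v) = k * f u + f v.
  move=> [a ->] [b ->]; rewrite /f scalerA -scalerDl !coefE; ring.
have fb v : S v -> `|f v| <= 1%:C * `|v|.
  move=> [a ->]; rewrite /f coefE rmorph1 mul1r normrM normr_id normrZ //.
have [F [Fc Fe Fb]] := normed_hb S0 SD fl ler01 fb.
have [b hb] := dp_onto hdp Fc.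
exists b; split.
  have [x [x1 hx]] := dp_isom_ge hdp b ltr01.
  have : `|pA b x| <= 1 by rewrite hb; apply: le_trans (Fb x) _; rewrite rmorph1 mul1r.
  move=> h1; have := lt_le_trans hx h1; rewrite ltrBlDr => h2.
  by apply: ltW.
rewrite hb Fe; last by exists 1; rewrite scale1r.
by rewrite /f -{1}[q]scale1r coefE mul1r.
Qed.

Lemma rep_approx (g : A -> K) :
  (forall e : R, 0 < e -> exists q : P, forall a, `|g a - pA a q| <= e%:C * `|a|) ->
  rep g.
Proof.
move=> h.
pose Qs (e : R) := [set q : P | forall a, `|g a - pA a q| <= e%:C * `|a|].
pose FF := filter_from [set e : R | 0 < e] Qs.
have FFf : Filter FF.
  apply: filter_from_filter; first by exists 1; exact: ltr01.
  move=> i j i0 j0; exists (Num.min i j); first by rewrite /= lt_min i0 j0.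
  move=> q hq; split => a; apply: le_trans (hq a) _; apply: ler_wpM2r => //;
    rewrite lecR ge_min lexx ?orbT //.
have FFp : ProperFilter FF.
  apply: filter_from_proper => e e0; have [q hq] := h e e0; by exists q.
have Qtwo e x y : 0 <= e -> Qs e x -> Qs e y -> `|x - y| <= (4 * e)%:C.
  move=> e0 hx hy; have [b [b2 hb]] := norming (x - y).
  rewrite -[`|x - y|]normr_id -hb (linfB (pA_linr b)).
  apply: le_trans (ler_distD (g b) _ _) _.
  rewrite distrC; apply: le_trans (lerD (hx b) (hy b)) _.
  rewrite -mulrDl -rmorphD.
  apply: le_trans (ler_wpM2l _ b2) _; first by rewrite ler0c; lra.
  rewrite -(rmorph_nat (real_complex R)) -rmorphM lecR; lra.
have Fc : cauchy FF.
  apply: cauchy_exP => eps eps0.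
  have er : eps = (Re eps)%:C by apply: ge0_RC; exact: ltW.
  have r0 : 0 < Re eps by move: eps0; rewrite er ltcR.
  have [x hx] := h (Re eps / 8) (divr_gt0 r0 (ltr0Sn _ 7)).
  exists x; exists (Re eps / 8); first exact: (divr_gt0 r0 (ltr0Sn _ 7)).
  move=> y hy; rewrite -ball_normE /= er.
  apply: le_lt_trans (Qtwo _ _ _ _ hx hy) _; last by rewrite ltcR; lra.
  by apply: divr_ge0; [exact: ltW | exact: ler0n].
have /cauchy_cvgP Fcv := Fc.
set l := lim FF in Fcv.
exists l => a; apply/eqP; rewrite -subr_eq0; apply/eqP; apply: eq0_small => e e0.
pose na := Re `|a|.
have naE : `|a| = na%:C := normRC a.
have na0 : 0 <= na by have := normr_ge0 a; rewrite lecE => /andP[_].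
pose M := na + 1.
have M0 : 0 < M by rewrite /M; lra.
pose e1 := e / (2 * M).
have e10 : 0 < e1 by rewrite /e1 divr_gt0 // mulr_gt0.
have h1 : e1 * (2 * M) = e by rewrite /e1 divfK // mulf_neq0 // lt0r_neq0.
have Fn : FF (Qs e1) by exists e1.
have e1C : 0 < e1%:C by rewrite ltcR.
have Fl : FF (ball l e1%:C) := Fcv _ (nbhsx_ballx l _ e1C).
have [y [hy1 hy2]] := filter_ex (filterI Fn Fl).
move: hy2; rewrite -ball_normE /= => hy2.
apply: le_trans (ler_distD (pA a y) _ _) _.
rewrite -(linfB (pA_linr a)).
apply: le_trans (lerD (hy1 a) (dp_isom_le hdp a (y - l))) _.
have hyl : `|y - l| <= e1%:C by rewrite distrC; exact: ltW.
apply: le_trans (lerD (lexx _) (ler_wpM2l (normr_ge0 a) hyl)) _.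
rewrite naE -!rmorphM -rmorphD lecR.
rewrite /M in h1; nra.
Qed.

End Rep.


Section Sigma.
Variable R : realType.
Local Notation K := (R[i]).
Variables (A P : completeNormedModType K) (mul : A -> A -> A) (pA : A -> P -> K).
Hypothesis hdba : dual_banach_algebra mul pA.

Lemma hba : banach_algebra mul. Proof. by case: hdba. Qed.
Lemma hdp : dual_pairing pA. Proof. by case: hdba. Qed.
Lemma hwL b : weak_continuous pA pA (fun a => mul a b). Proof. by case: hdba. Qed.
Lemma hwR b : weak_continuous pA pA (fun a => mul b a). Proof. by case: hdba. Qed.

Lemma mul0l c : mul 0 c = 0.
Proof.
have := ba_linl hba 1 0 0 c; rewrite !scale1r addr0 => h.
by apply: (addrI (mul 0 c)); rewrite addr0 -h.
Qed.
Lemma mul0r c : mul c 0 = 0.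
Proof.
have := ba_linr hba 1 c 0 0; rewrite !scale1r addr0 => h.
by apply: (addrI (mul c 0)); rewrite addr0 -h.
Qed.
Lemma mulBl a b c : mul (a - b) c = mul a c - mul b c.
Proof.
have := ba_linl hba (-1) b a c; rewrite !scaleN1r addrC => ->.
by rewrite addrC.
Qed.
Lemma mulBr a b c : mul c (a - b) = mul c a - mul c b.
Proof.
have := ba_linr hba (-1) c b a; rewrite !scaleN1r addrC => ->.
by rewrite addrC.
Qed.

Lemma cdL (f : cdual A) c : is_cont_functional (fun z => sval f (mul c z)).
Proof.
have [C [C0 hC]] := cont_bound (svalP f).
have fl : linf (sval f) := (svalP f).1.
apply: (@bound_cont _ _ _ (C * Re `|c|)).
  by apply: mulr_ge0; [exact: ltW | have := normr_ge0 c; rewrite lecE => /andP[_]].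
  by move=> k u v /=; rewrite (ba_linr hba) fl.
move=> v; apply: le_trans (hC _) _.
rewrite RCM -mulrA; apply: ler_wpM2l; first by rewrite ler0c ltW.
exact: (ba_submul hba).
Qed.

Lemma cdR (f : cdual A) c : is_cont_functional (fun z => sval f (mul z c)).
Proof.
have [C [C0 hC]] := cont_bound (svalP f).
have fl : linf (sval f) := (svalP f).1.
apply: (@bound_cont _ _ _ (C * Re `|c|)).
  by apply: mulr_ge0; [exact: ltW | have := normr_ge0 c; rewrite lecE => /andP[_]].
  by move=> k u v /=; rewrite (ba_linl hba) fl.
move=> v; apply: le_trans (hC _) _.
rewrite RCM -mulrA; apply: ler_wpM2l; first by rewrite ler0c ltW.
by rewrite mulrC; exact: (ba_submul hba).
Qed.

Local Notation sw := (sigmawc mul pA).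

Lemma swP x : sw x <-> (forall f : cdual A,
  rep pA (fun a => sval f (mul a x)) /\ rep pA (fun a => sval f (mul x a))).
Proof.
split.
- move=> [h1 h2] f; split.
  + apply: (wc_rep hdp (q := @weak_pairing _ A) (G := fun a => mul a x) (w := f)) => //.
    by move=> k a b; rewrite /weak_pairing (ba_linl hba) (svalP f).1.
  + apply: (wc_rep hdp (q := @weak_pairing _ A) (G := fun a => mul x a) (w := f)) => //.
    by move=> k a b; rewrite /weak_pairing (ba_linr hba) (svalP f).1.
- move=> h; split; apply: rep_wc => f; [exact: (h f).1 | exact: (h f).2].
Qed.

Lemma rep_comp (G : A -> A) q0 : weak_continuous pA pA G ->
  (forall k a b, G (k *: a + b) = k *: G a + G b) -> rep pA (fun a => pA (G a) q0).
Proof.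
move=> hG Gl; apply: (wc_rep hdp (q := pA) (G := G) (w := q0)) => //.
by move=> k a b; rewrite Gl (pA_linl hdp).
Qed.

Lemma sw_mulL c x : sw x -> sw (mul c x).
Proof.
move=> /swP hx; apply/swP => f; split.
- have [[q1 h1] _] := hx f.
  have [q hq] := rep_comp q1 (@hwL c) (fun k a b => ba_linl hba k a b c).
  by exists q => a; rewrite (ba_assoc hba) h1 hq.
- pose f' : cdual A := exist _ _ (cdL f c).
  have [_ [q hq]] := hx f'.
  by exists q => a; rewrite -hq /= (ba_assoc hba).
Qed.

Lemma sw_mulR c x : sw x -> sw (mul x c).
Proof.
move=> /swP hx; apply/swP => f; split.
- pose f' : cdual A := exist _ _ (cdR f c).
  have [[q hq] _] := hx f'.
  by exists q => a; rewrite -hq /= (ba_assoc hba).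
- have [_ [q1 h1]] := hx f.
  have [q hq] := rep_comp q1 (@hwR c) (fun k a b => ba_linr hba k c a b).
  by exists q => a; rewrite -(ba_assoc hba) h1 hq.
Qed.

Lemma sw0 : sw 0.
Proof.
apply/swP => f; have fl : linf (sval f) := (svalP f).1.
split; exists 0 => a; rewrite ?mul0l ?mul0r (linf0 fl); exact/esym/(linf0 (pA_linr hdp a)).
Qed.

Lemma swD k u v : sw u -> sw v -> sw (k *: u + v).
Proof.
move=> /swP hu /swP hv; apply/swP => f; have fl : linf (sval f) := (svalP f).1.
have [[q1 h1] [q2 h2]] := hu f; have [[q3 h3] [q4 h4]] := hv f.
split.
- by exists (k *: q1 + q3) => a; rewrite (ba_linr hba) fl h1 h3 (pA_linr hdp).
- by exists (k *: q2 + q4) => a; rewrite (ba_linl hba) fl h2 h4 (pA_linr hdp).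
Qed.

Lemma sw_closed x : (forall e : K, 0 < e -> exists y, sw y /\ `|x - y| < e) -> sw x.
Proof.
move=> hx; apply/swP => f; have fl : linf (sval f) := (svalP f).1.
have [C [C0 hC]] := cont_bound (svalP f).
have key e : 0 < e -> exists y, sw y /\ (C%:C * `|x - y| <= e%:C).
  move=> e0; have eC : 0 < e%:C / C%:C by rewrite divr_gt0 // ltcR.
  have [y [sy hy]] := hx _ eC.
  exists y; split => //; rewrite mulrC -ler_pdivlMr ?ltcR //; exact: ltW.
have C0' : 0 <= C%:C by rewrite ler0c ltW.
split; apply: (rep_approx hdp) => e e0; have [y [/swP sy hy]] := key e e0.
- have [[q hq] _] := sy f; exists q => a; rewrite -hq -(linfB fl) -mulBr.
  apply: le_trans (hC _) _.
  apply: le_trans (ler_wpM2l C0' (ba_submul hba a (x - y))) _.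
  by rewrite mulrCA mulrC; exact: (ler_wpM2r (normr_ge0 a) hy).
- have [_ [q hq]] := sy f; exists q => a; rewrite -hq -(linfB fl) -mulBl.
  apply: le_trans (hC _) _.
  apply: le_trans (ler_wpM2l C0' (ba_submul hba (x - y) a)) _.
  by rewrite mulrA; exact: (ler_wpM2r (normr_ge0 a) hy).
Qed.

End Sigma.


Section Final.
Variable R : realType.
Local Notation K := (R[i]).
Variables (A P : completeNormedModType K) (mul : A -> A -> A) (pA : A -> P -> K).
Hypothesis hdba : dual_banach_algebra mul pA.
Local Notation sw := (sigmawc mul pA).
Local Notation Fsp := (subsp (sw0 hdba) (@swD _ _ _ _ _ hdba) (@sw_closed _ _ _ _ _ hdba)).

Definition lact (a : A) (x : Fsp) : Fsp := exist _ (mul a (sval x)) (sw_mulL hdba a (svalP x)).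
Definition ract (x : Fsp) (a : A) : Fsp := exist _ (mul (sval x) a) (sw_mulR hdba a (svalP x)).

Lemma bimod : banach_bimodule mul lact ract.
Proof.
have hb := hba hdba.
split.
- by move=> k a b x; apply: sval_inj; rewrite /= (ba_linl hb).
- by move=> k a x y; apply: sval_inj; rewrite /= (ba_linr hb).
- by move=> k x y a; apply: sval_inj; rewrite /= (ba_linl hb).
- by move=> k x a b; apply: sval_inj; rewrite /= (ba_linr hb).
- by move=> a b x; apply: sval_inj; rewrite /= (ba_assoc hb).
- by move=> x a b; apply: sval_inj; rewrite /= (ba_assoc hb).
- by move=> a x b; apply: sval_inj; rewrite /= (ba_assoc hb).
- by move=> a x; rewrite !sub_normE /=; exact: (ba_submul hb).
- by move=> x a; rewrite !sub_normE /=; exact: (ba_submul hb).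
Qed.

Lemma extend (phi : Fsp -> K) : is_cont_functional phi ->
  exists Phi : A -> K, is_cont_functional Phi /\ forall x : Fsp, Phi (sval x) = phi x.
Proof.
move=> hphi; have [C [C0 hC]] := cont_bound hphi.
have pl : linf phi := hphi.1.
pose f0 v := match pselect (sw v) with left h => phi (exist _ v h) | right _ => 0 end.
have f0E v (h : sw v) : f0 v = phi (exist _ v h).
  rewrite /f0; case: pselect => [h'|nh]; last by exfalso; apply: nh.
  by rewrite (Prop_irrelevance h' h).
have fl k u v : sw u -> sw v -> f0 (k *: u + v) = k * f0 u + f0 v.
  move=> su sv; rewrite (f0E _ (@swD _ _ _ _ _ hdba k u v su sv)) (f0E _ su) (f0E _ sv).
  by rewrite -pl; congr phi; apply: sval_inj.
have fb v : sw v -> `|f0 v| <= C%:C * `|v|.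
  by move=> sv; rewrite (f0E _ sv); apply: le_trans (hC _) _.
have [Phi [hP eP bP]] := normed_hb (sw0 hdba) (@swD _ _ _ _ _ hdba) fl (ltW C0) fb.
exists Phi; split => // x; rewrite eP; last exact: svalP.
by rewrite (f0E _ (svalP x)); congr phi; apply: sval_inj.
Qed.

Lemma normal : dual_module_normal pA lact ract.
Proof.
move=> phi hphi; have [Phi [hP eP]] := extend hphi.
pose g : cdual A := exist _ Phi hP.
split; apply: rep_wc => w; have /swP hw := svalP w.
- have [_ [q hq]] := hw hdba g; exists q => a; rewrite -eP; exact: hq.
- have [[q hq] _] := hw hdba g; exists q => a; rewrite -eP; exact: hq.
Qed.

Variable D : A -> A -> K.
Hypothesis hD : dual_derivation mul mul mul D.
Definition D' (a : A) (x : Fsp) : K := D a (sval x).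

Lemma deriv : dual_derivation mul lact ract D'.
Proof.
case: hD => Dc Dl [C hC] Dd; split.
- move=> a; have [Ca [Ca0 hCa]] := cont_bound (Dc a).
  apply: (@bound_cont _ _ _ Ca (ltW Ca0)).
    by move=> k x y; rewrite /D' /=; exact: (Dc a).1.
  by move=> x; rewrite /D' sub_normE; exact: hCa.
- by move=> k a b x; exact: Dl.
- by exists C => a x; rewrite sub_normE; exact: hC.
- by move=> a b x; rewrite /D' /=; exact: Dd.
Qed.

Hypothesis hw : weak_continuous pA
  (fun (psi : A -> K) (x : {x : A | sw x}) => psi (sval x)) D.

Lemma wcD' : weak_continuous pA (fun (psi : Fsp -> K) (x : Fsp) => psi x) D'.
Proof.
move=> x0 V [n [ys [e [e0 hV]]]].
have hV' : weak_nbhs (fun (psi : A -> K) (x : {x : A | sw x}) => psi (sval x)) (D x0)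
    [set psi | V (fun x : Fsp => psi (sval x))].
  by exists n, ys, e; split => // psi hpsi; apply: hV; exact: hpsi.
exact: hw hV'.
Qed.

End Final.

Theorem theorem3p5 (R : realType)
  (A P : completeNormedModType R[i]) (mul : A -> A -> A) (pA : A -> P -> R[i]) :
  dual_banach_algebra mul pA ->
  connes_amenable mul pA ->
  weakly_connes_amenable mul pA.
Proof.
move=> hdba hca D hD hw.
have [phi [hphi hid]] := hca _ _ _ (bimod hdba) (@normal _ _ _ _ _ hdba) _ (deriv hdba hD) (@wcD' _ _ _ _ _ hdba D hw).
have [Phi [hP eP]] := extend hphi.
exists Phi; split.
- by move=> k u v _ _; exact: hP.1.
- exact: continuous_subspaceT hP.2.
- move=> a x sx; have := hid a (exist _ x sx); rewrite /D' /= => ->.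
  by rewrite -!eP.
Qed.
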